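(* Let $\mathcal{D}=\{(x_i,a_i,y_i)\}_{i=1}^N$ be a dataset with $a_i\in\{1,2\}$, $y_i\in\{0,1\}$. The procedure ''GABOS learning with post-processing'' (described in the context), with misclassification loss and with bias measured by demographic parity or equal opportunity, is slack-consistent: for every individual $(x,a)$ (not necessarily in $\mathcal{D}$), the prediction $f_\beta(x,a)$ of the returned classifier is monotonic in the slack $\beta>0$.
   Context: GABOS learning with post-processing, for slack $\beta>0$: (1) Split $\mathcal{D}$ into $\mathcal{D}_j=\{(x_i,a_i,y_i): a_i=j\}$, $j=1,2$. (2) For each $j$ fix (independently of $\beta$) a finite partition $c_j:\mathcal{X}\to\{1,\dots,M\}$ of the feature space such that every cell contains at least one member of $\mathcal{D}_j$ (e.g. obtained by clustering or a decision tree). (3) For each $j$ and cell $m$ set $f_j(m)=\frac{|\{i: y_i=1, (x_i,a_i,y_i)\in\mathcal{D}_j, c_j(x_i)=m\}|}{|\{i:(x_i,a_i,y_i)\in\mathcal{D}_j, c_j(x_i)=m\}|}$. (4) Define the score $\mathcal{R}(x,a)=f_a(c_a(x))$ and run the post-processing method below on $\mathcal{R}$ with slack $\beta$; return the resulting thresholded classifier $f_\beta$. Post-processing: a normalized threshold $\tau\in[0,1]$ for group $a$ is a threshold classifier on $\mathcal{R}$ within group $a$, randomized over at most two adjacent deterministic thresholds, with positive prediction rate $1-\tau$ in group $a$ on $\mathcal{D}$; a pair $(\tau_1,\tau_2)$ defines a classifier with misclassification loss $\mathcal{L}(\tau_1,\tau_2)$ on $\mathcal{D}$ and bias $\mathcal{B}(\tau_1,\tau_2)$.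 Among all $(\tau_1,\tau_2)\in[0,1]^2$ minimizing $\mathcal{L}$ subject to $|\mathcal{B}|\le\beta$, keep those with smallest $|\mathcal{B}|$, then those with smallest $\tau_1$, then return the one with smallest $\tau_2$. Bias: for a classifier $f$ with positive-prediction probability $f(x,a)\in[0,1]$, demographic-parity bias is $\frac{\sum_i f(x_i,a_i)\mathbb{1}[a_i=1]}{\sum_i\mathbb{1}[a_i=1]}-\frac{\sum_i f(x_i,a_i)\mathbb{1}[a_i=2]}{\sum_i\mathbb{1}[a_i=2]}$; equal-opportunity bias is the same with $y_i=1$ added to every indicator. Slack-consistency: for every $(x,a)$ and all $\beta_1<\beta_2<\beta_3$, either $f_{\beta_1}(x,a)\le f_{\beta_2}(x,a)\le f_{\beta_3}(x,a)$ or $f_{\beta_1}(x,a)\ge f_{\beta_2}(x,a)\ge f_{\beta_3}(x,a)$. *)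

(* Defs.v *)
From HB Require Import structures.
From mathcomp Require Import all_boot all_order all_algebra.
From mathcomp Require Import reals.
Set Implicit Arguments. Unset Strict Implicit. Unset Printing Implicit Defensive.
Import Order.TTheory GRing.Theory Num.Theory.
Local Open Scope ring_scope.

Definition g1 : 'I_2 := @Ordinal 2 0 isT.
Definition g2 : 'I_2 := @Ordinal 2 1 isT.

(* With t a score value this is the
   mixture (weight p) of the two adjacent deterministic thresholds
   [r >= t] and [r > t]. *)
Definition thr (R : realFieldType) (t p r : R) : R :=
  if t < r then 1 else if r == t then p else 0.

Definition rate (R : realFieldType) (X : Type) (N : nat) (x : 'I_N -> X)
  (a : 'I_N -> 'I_2) (s : X -> 'I_2 -> R) (j : 'I_2) (t p : R) : R :=
  (\sum_(i < N | a i == j) thr t p (s (x i) j)) / (#|[pred i | a i == j]|)%:R.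

Definition is_nthr (R : realFieldType) (X : Type) (N : nat) (x : 'I_N -> X)
  (a : 'I_N -> 'I_2) (s : X -> 'I_2 -> R) (j : 'I_2) (tau t p : R) : Prop :=
  0 <= tau <= 1 /\ 0 <= p <= 1 /\ rate x a s j t p = 1 - tau.

Definition clf (R : realFieldType) (X : Type) (s : X -> 'I_2 -> R)
  (tt pp : 'I_2 -> R) (x0 : X) (j : 'I_2) : R :=
  thr (tt j) (pp j) (s x0 j).

Definition loss (R : realFieldType) (X : Type) (N : nat) (x : 'I_N -> X)
  (a : 'I_N -> 'I_2) (y : 'I_N -> bool) (f : X -> 'I_2 -> R) : R :=
  (\sum_(i < N) (if y i then 1 - f (x i) (a i) else f (x i) (a i))) / N%:R.

Inductive fairness := DP | EO.

Definition bcond (N : nat) (y : 'I_N -> bool) (k : fairness) (i : 'I_N) : bool :=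
  match k with DP => true | EO => y i end.

Definition group_rate (R : realFieldType) (X : Type) (N : nat) (x : 'I_N -> X)
  (a : 'I_N -> 'I_2) (y : 'I_N -> bool) (k : fairness) (f : X -> 'I_2 -> R)
  (j : 'I_2) : R :=
  (\sum_(i < N | (a i == j) && bcond y k i) f (x i) (a i))
    / (#|[pred i | (a i == j) && bcond y k i]|)%:R.

Definition bias (R : realFieldType) (X : Type) (N : nat) (x : 'I_N -> X)
  (a : 'I_N -> 'I_2) (y : 'I_N -> bool) (k : fairness) (f : X -> 'I_2 -> R) : R :=
  group_rate x a y k f g1 - group_rate x a y k f g2.

Definition postproc_opt (R : realFieldType) (X : Type) (N : nat) (x : 'I_N -> X)
  (a : 'I_N -> 'I_2) (y : 'I_N -> bool) (k : fairness) (s : X -> 'I_2 -> R)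
  (beta : R) (tau tt pp : 'I_2 -> R) : Prop :=
  (forall j, is_nthr x a s j (tau j) (tt j) (pp j)) /\
  `|bias x a y k (clf s tt pp)| <= beta /\
  forall tau' tt' pp' : 'I_2 -> R,
    (forall j, is_nthr x a s j (tau' j) (tt' j) (pp' j)) ->
    `|bias x a y k (clf s tt' pp')| <= beta ->
    let L := loss x a y (clf s tt pp) in
    let L' := loss x a y (clf s tt' pp') in
    let B := `|bias x a y k (clf s tt pp)| in
    let B' := `|bias x a y k (clf s tt' pp')| in
    L < L' \/ (L = L' /\ (B < B' \/ (B = B' /\
      (tau g1 < tau' g1 \/ (tau g1 = tau' g1 /\ tau g2 <= tau' g2))))).

Definition gabos_freq (R : realFieldType) (X : Type) (N M : nat) (x : 'I_N -> X)
  (a : 'I_N -> 'I_2) (y : 'I_N -> bool) (c : 'I_2 -> X -> 'I_M)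
  (j : 'I_2) (m : 'I_M) : R :=
  (#|[pred i | (a i == j) && y i && (c j (x i) == m)]|)%:R
    / (#|[pred i | (a i == j) && (c j (x i) == m)]|)%:R.

Definition gabos_score (R : realFieldType) (X : Type) (N M : nat) (x : 'I_N -> X)
  (a : 'I_N -> 'I_2) (y : 'I_N -> bool) (c : 'I_2 -> X -> 'I_M)
  (x0 : X) (j : 'I_2) : R :=
  gabos_freq R x a y c j (c j x0).

(* Main.v *)
Require Import Defs.
From HB Require Import structures.
From mathcomp Require Import all_boot all_order all_algebra.
From mathcomp Require Import reals.
From mathcomp Require Import ring lra.
From Stdlib Require Import IndefiniteDescription.
Import Order.TTheory GRing.Theory Num.Theory.
Local Open Scope ring_scope.
Set Implicit Arguments. Unset Strict Implicit. Unset Printing Implicit Defensive.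

Section Abstract.
Variables (R : realFieldType) (p1 p2 T1 T2 : R -> R).
Definition in01 (u : R) := 0 <= u <= 1.
Definition convex01 (p : R -> R) := forall u v l : R, in01 u -> in01 v -> in01 l ->
  p (l * u + (1 - l) * v) <= l * p u + (1 - l) * p v.
Hypothesis cv1 : convex01 p1.
Hypothesis cv2 : convex01 p2.
Hypothesis T1d : forall u v, in01 u -> in01 v -> u < v -> T1 v < T1 u.
Hypothesis T2d : forall u v, in01 u -> in01 v -> u < v -> T2 v < T2 u.

Definition PP u1 u2 := p1 u1 + p2 u2.
Definition better (u1 u2 v1 v2 : R) :=
  let L := PP u1 u2 in let L' := PP v1 v2 in
  let B := `|u1 - u2| in let B' := `|v1 - v2| in
  L < L' \/ (L = L' /\ (B < B' \/ (B = B' /\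
      (T1 u1 < T1 v1 \/ (T1 u1 = T1 v1 /\ T2 u2 <= T2 v2))))).
Definition opt (b u1 u2 : R) := [/\ in01 u1, in01 u2, `|u1 - u2| <= b &
  forall v1 v2, in01 v1 -> in01 v2 -> `|v1 - v2| <= b -> better u1 u2 v1 v2].

Lemma Tle1 u v : in01 u -> in01 v -> T1 u <= T1 v -> v <= u.
Proof. move=> hu hv h; rewrite leNgt; apply/negP => uv; have := T1d hu hv uv; by rewrite ltNge h. Qed.
Lemma Tle2 u v : in01 u -> in01 v -> T2 u <= T2 v -> v <= u.
Proof. move=> hu hv h; rewrite leNgt; apply/negP => uv; have := T2d hu hv uv; by rewrite ltNge h. Qed.

Lemma better_L u1 u2 v1 v2 : better u1 u2 v1 v2 -> PP u1 u2 <= PP v1 v2.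
Proof. by case=> [/ltW|[-> _]]. Qed.
Lemma better_B u1 u2 v1 v2 : better u1 u2 v1 v2 -> PP u1 u2 = PP v1 v2 ->
  `|u1 - u2| <= `|v1 - v2|.
Proof. case=> [h e|[_ [/ltW //|[-> _]]]]; last by []. by move: h; rewrite e ltxx. Qed.
Lemma better_u1 u1 u2 v1 v2 : in01 u1 -> in01 v1 -> better u1 u2 v1 v2 ->
  PP u1 u2 = PP v1 v2 -> `|u1 - u2| = `|v1 - v2| -> v1 <= u1.
Proof.
move=> h1 h2 b eL eB; case: b => [h|[_ [h|[_ [h|[h _]]]]]].
- by move: h; rewrite eL ltxx.
- by move: h; rewrite eB ltxx.
- by apply: Tle1 => //; apply: ltW.
- by apply: Tle1 => //; rewrite h.
Qed.
Lemma better_antisym u1 u2 v1 v2 : in01 u1 -> in01 u2 -> in01 v1 -> in01 v2 ->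
  better u1 u2 v1 v2 -> better v1 v2 u1 u2 -> u1 = v1 /\ u2 = v2.
Proof.
move=> hu1 hu2 hv1 hv2 b1 b2.
have eL : PP u1 u2 = PP v1 v2 by apply/eqP; rewrite eq_le !better_L.
have eB : `|u1 - u2| = `|v1 - v2|.
  by apply/eqP; rewrite eq_le better_B // better_B.
have e1 : u1 = v1.
  by apply/eqP; rewrite eq_le (better_u1 hv1 hu1 b2) ?(better_u1 hu1 hv1 b1).
subst v1; split=> //.
move: b1 b2 => [h|[_ [h|[_ [h|[_ h1]]]]]]; try by move: h; rewrite ?eL ?eB ltxx.
move=> [h|[_ [h|[_ [h|[_ h2]]]]]]; try by move: h; rewrite ?eL ?eB ltxx.
by apply/eqP; rewrite eq_le (Tle2 hu2 hv2 h1) (Tle2 hv2 hu2 h2).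
Qed.

Lemma in01_conv u v l : in01 u -> in01 v -> in01 l -> in01 (l * u + (1 - l) * v).
Proof. rewrite /in01 => /andP[? ?] /andP[? ?] /andP[? ?]; apply/andP; split; nra. Qed.

Lemma four (p : R -> R) : convex01 p -> forall a b c d, in01 a -> in01 d ->
  a <= b <= d -> a <= c <= d -> b + c = a + d -> p b + p c <= p a + p d.
Proof.
move=> cv a b c d ha hd /andP[ab bd] /andP[ac cd] e.
have [ad|] := eqVneq a d.
  subst d; have -> : b = a by lra. have -> : c = a by lra. done.
move=> nad; have ad : a < d by rewrite lt_neqAle nad; lra.
set l := (d - b) / (d - a).
have dap : 0 < d - a by lra.
have hl : in01 l by rewrite /in01 /l; apply/andP; split;
  [apply: divr_ge0; lra | rewrite ler_pdivrMr //; lra].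
have hl' : in01 (1 - l) by move: hl; rewrite /in01 => /andP[? ?]; apply/andP; split; lra.
have eb : b = l * a + (1 - l) * d.
  rewrite /l; field; lra.
have ec : c = (1 - l) * a + (1 - (1 - l)) * d.
  have -> : c = a + d - b by lra.
  rewrite /l; field; lra.
have := cv _ _ _ ha hd hl; have := cv _ _ _ ha hd hl'; rewrite -eb -ec; lra.
Qed.

Lemma fact1 b b' u1 u2 v1 v2 : b <= b' -> opt b u1 u2 -> opt b' v1 v2 ->
  `|v1 - v2| <= b -> u1 = v1 /\ u2 = v2.
Proof.
move=> bb [h1 h2 hb hu] [h1' h2' hb' hv] hvb.
apply: better_antisym => //; first exact: hu.
by apply: hv => //; apply: le_trans bb.
Qed.

Lemma segZ b u1 u2 v1 v2 l : 0 <= b -> opt b u1 u2 -> in01 v1 -> in01 v2 ->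
  PP v1 v2 <= PP u1 u2 -> u1 - u2 != 0 -> in01 l ->
  l * (v1 - v2) + (1 - l) * (u1 - u2) = 0 -> False.
Proof.
move=> b0 [h1 h2 hb hu] hv1 hv2 Lle dn hl e.
set z1 := l * v1 + (1 - l) * u1; set z2 := l * v2 + (1 - l) * u2.
have hz : z1 - z2 = 0 by rewrite /z1 /z2 -e; ring.
have hz1 : in01 z1 by apply: in01_conv.
have hz2 : in01 z2 by apply: in01_conv.
have bz : better u1 u2 z1 z2 by apply: hu => //; rewrite hz normr0.
have c1 := cv1 hv1 h1 hl; have c2 := cv2 hv2 h2 hl.
move: hl; rewrite /in01 => /andP[l0 l1].
have : PP z1 z2 <= PP u1 u2.
  rewrite /PP /z1 /z2; move: Lle; rewrite /PP => Lle; nra.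
move=> Lz; have eL : PP u1 u2 = PP z1 z2 by apply/eqP; rewrite eq_le better_L // Lz.
have := better_B bz eL; rewrite hz normr0 normr_le0; by rewrite (negbTE dn).
Qed.

Lemma fact3 b b' u1 u2 v1 v2 : 0 <= b -> b <= b' -> opt b u1 u2 -> opt b' v1 v2 ->
  (0 < u1 - u2 -> 0 <= v1 - v2) /\ (u1 - u2 < 0 -> v1 - v2 <= 0).
Proof.
move=> b0 bb ou ov; have [h1 h2 hb hu] := ou; have [h1' h2' hb' hv] := ov.
have Lle : PP v1 v2 <= PP u1 u2 by apply: better_L; apply: hv => //; apply: le_trans bb.
split=> dp; rewrite leNgt; apply/negP => dq.
- pose l := (u1 - u2) / ((u1 - u2) - (v1 - v2)).
  have pp : 0 < (u1 - u2) - (v1 - v2) by lra.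
  apply: (segZ b0 ou h1' h2' Lle (l := l)).
  + by rewrite gt_eqF.
  + rewrite /in01 /l; apply/andP; split; first by apply: divr_ge0; lra.
    by rewrite ler_pdivrMr //; lra.
  + rewrite /l; field; lra.
- pose l := (u2 - u1) / ((v1 - v2) - (u1 - u2)).
  have pp : 0 < (v1 - v2) - (u1 - u2) by lra.
  apply: (segZ b0 ou h1' h2' Lle (l := l)).
  + by rewrite lt_eqF.
  + rewrite /in01 /l; apply/andP; split; first by apply: divr_ge0; lra.
    by rewrite ler_pdivrMr //; lra.
  + rewrite /l; field; lra.
Qed.
Lemma swapL b b' u1 u2 v1 v2 r1 r2 s1 s2 : b <= b' -> opt b u1 u2 -> opt b' v1 v2 ->
  in01 r1 -> in01 r2 -> in01 s1 -> in01 s2 ->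
  `|s1 - s2| <= b -> `|r1 - r2| <= b' -> PP r1 r2 + PP s1 s2 <= PP u1 u2 + PP v1 v2 ->
  (`|s1 - s2| = `|u1 - u2| -> s1 <= u1) /\ (`|r1 - r2| = `|v1 - v2| -> r1 <= v1).
Proof.
move=> bb [h1 h2 hb hu] [h1' h2' hb' hv] hr1 hr2 hs1 hs2 sb rb Lsum.
have bs := hu _ _ hs1 hs2 sb; have br := hv _ _ hr1 hr2 rb.
have l1 := better_L bs; have l2 := better_L br.
have e1 : PP u1 u2 = PP s1 s2 by apply/eqP; rewrite eq_le l1 /=; lra.
have e2 : PP v1 v2 = PP r1 r2 by apply/eqP; rewrite eq_le l2 /=; lra.
split=> eB; [exact: (better_u1 h1 hs1 bs e1 (esym eB)) | exact: (better_u1 h1' hr1 br e2 (esym eB))].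
Qed.

Lemma G2 b b' u1 u2 v1 v2 lo hi : b <= b' -> opt b u1 u2 -> opt b' v1 v2 ->
  (lo = u2 /\ hi = v2 \/ lo = v2 /\ hi = u2) ->
  lo <= u1 - v1 + v2 <= hi -> lo <= v1 - u1 + u2 <= hi -> u1 = v1.
Proof.
move=> bb ou ov hlh hr hs.
have [h1 h2 hb _] := ou; have [h1' h2' hb' _] := ov.
have [hlo hhi] : in01 lo /\ in01 hi by case: hlh => -[-> ->].
have elh : p2 lo + p2 hi = p2 u2 + p2 v2 by case: hlh => -[-> ->] //; rewrite addrC.
have hr2 : in01 (u1 - v1 + v2).
  move: hlo hhi hr; rewrite /in01 => /andP[? ?] /andP[? ?] /andP[? ?]; apply/andP; split; lra.
have hs2 : in01 (v1 - u1 + u2).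
  move: hlo hhi hs; rewrite /in01 => /andP[? ?] /andP[? ?] /andP[? ?]; apply/andP; split; lra.
have f4 := four cv2 hlo hhi hr hs.
have e1 : u1 - (u1 - v1 + v2) = v1 - v2 by ring.
have e2 : v1 - (v1 - u1 + u2) = u1 - u2 by ring.
have := @swapL b b' u1 u2 v1 v2 u1 (u1 - v1 + v2) v1 (v1 - u1 + u2) bb ou ov h1 hr2 h1' hs2.
rewrite e1 e2 => /(_ hb hb').
have sm : u1 - v1 + v2 + (v1 - u1 + u2) = lo + hi.
  case: hlh => -[-> ->]; ring.
move=> /(_ ltac:(move: (f4 sm) elh; rewrite /PP; lra)) [A B].
by apply/eqP; rewrite eq_le A // B.
Qed.

Lemma G1 b b' u1 u2 v1 v2 lo hi : b <= b' -> opt b u1 u2 -> opt b' v1 v2 ->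
  (lo = u1 /\ hi = v1 \/ lo = v1 /\ hi = u1) ->
  lo <= v1 - v2 + u2 <= hi -> lo <= u1 - u2 + v2 <= hi -> u2 = v2.
Proof.
move=> bb ou ov hlh hr hs.
have [h1 h2 hb _] := ou; have [h1' h2' hb' _] := ov.
have [hlo hhi] : in01 lo /\ in01 hi by case: hlh => -[-> ->].
have elh : p1 lo + p1 hi = p1 u1 + p1 v1 by case: hlh => -[-> ->] //; rewrite addrC.
have hr2 : in01 (v1 - v2 + u2).
  move: hlo hhi hr; rewrite /in01 => /andP[? ?] /andP[? ?] /andP[? ?]; apply/andP; split; lra.
have hs2 : in01 (u1 - u2 + v2).
  move: hlo hhi hs; rewrite /in01 => /andP[? ?] /andP[? ?] /andP[? ?]; apply/andP; split; lra.
have f4 := four cv1 hlo hhi hr hs.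
have e1 : v1 - v2 + u2 - u2 = v1 - v2 by ring.
have e2 : u1 - u2 + v2 - v2 = u1 - u2 by ring.
have := @swapL b b' u1 u2 v1 v2 (v1 - v2 + u2) u2 (u1 - u2 + v2) v2 bb ou ov hr2 h2 hs2 h2'.
rewrite e1 e2 => /(_ hb hb').
have sm : v1 - v2 + u2 + (u1 - u2 + v2) = lo + hi.
  case: hlh => -[-> ->]; ring.
move=> /(_ ltac:(move: (f4 sm) elh; rewrite /PP; lra)) [A B].
have : u1 - u2 + v2 <= u1 by exact: A.
have : v1 - v2 + u2 <= v1 by exact: B.
move=> C D; apply/eqP; rewrite eq_le; apply/andP; split; lra.
Qed.

Lemma fact2 b b' u1 u2 v1 v2 : 0 <= b -> b <= b' -> opt b u1 u2 -> opt b' v1 v2 ->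
  (b < v1 - v2 -> u1 <= v1 /\ v2 <= u2) /\ (v1 - v2 < - b -> v1 <= u1 /\ u2 <= v2).
Proof.
move=> b0 bb ou ov; have [h1 h2 hb _] := ou.
move: hb; rewrite ler_norml => /andP[db1 db2].
split=> dp; split.
- rewrite leNgt; apply/negP => vu.
  have [uv2|vu2] := leP u2 v2; first lra.
  have := @G2 b b' u1 u2 v1 v2 v2 u2 bb ou ov (or_intror (conj erefl erefl)).
  move=> /(_ ltac:(apply/andP; split; lra) ltac:(apply/andP; split; lra)) e; lra.
- rewrite leNgt; apply/negP => vu.
  have := @G1 b b' u1 u2 v1 v2 u1 v1 bb ou ov (or_introl (conj erefl erefl)).
  move=> /(_ ltac:(apply/andP; split; lra) ltac:(apply/andP; split; lra)) e; lra.
- rewrite leNgt; apply/negP => uv.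
  have [uv2|vu2] := leP v2 u2; first lra.
  have := @G2 b b' u1 u2 v1 v2 u2 v2 bb ou ov (or_introl (conj erefl erefl)).
  move=> /(_ ltac:(apply/andP; split; lra) ltac:(apply/andP; split; lra)) e; lra.
- rewrite leNgt; apply/negP => vu.
  have := @G1 b b' u1 u2 v1 v2 v1 u1 bb ou ov (or_intror (conj erefl erefl)).
  move=> /(_ ltac:(apply/andP; split; lra) ltac:(apply/andP; split; lra)) e; lra.
Qed.

Lemma abs_main b1 b2 b3 u1 u2 v1 v2 w1 w2 : 0 < b1 -> b1 < b2 -> b2 < b3 ->
  opt b1 u1 u2 -> opt b2 v1 v2 -> opt b3 w1 w2 ->
  ((u1 <= v1 <= w1) \/ (w1 <= v1 <= u1)) /\ ((u2 <= v2 <= w2) \/ (w2 <= v2 <= u2)).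
Proof.
move=> q1 p12 p23 ou ov ow.
have triv : forall a b c : R, a = b -> (a <= b <= c) \/ (c <= b <= a).
  move=> a b c ->; case: (lerP b c) => h; [left|right]; rewrite lexx ?h ?ltW //.
have triv' : forall a b c : R, b = c -> (a <= b <= c) \/ (c <= b <= a).
  move=> a b c ->; case: (lerP a c) => h; [left|right]; rewrite lexx ?h ?ltW //.
have [hv|hv] := lerP `|v1 - v2| b1.
  have [-> ->] := fact1 (ltW p12) ou ov hv; split; exact: triv.
have [hw|hw] := lerP `|w1 - w2| b2.
  have [-> ->] := fact1 (ltW p23) ov ow hw; split; exact: triv'.
have b10 : 0 <= b1 by exact: ltW q1.
have b20 : 0 <= b2 by lra.
move: hv hw; rewrite !ltr_normr => /orP[hv|hv] /orP[hw|hw].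
- have [A B] := (fact2 b10 (ltW p12) ou ov).1 hv.
  have [C D] := (fact2 b20 (ltW p23) ov ow).1 hw.
  split; [left|right]; apply/andP; split => //.
- have := (fact3 b20 (ltW p23) ov ow).1 ltac:(lra); lra.
- have := (fact3 b20 (ltW p23) ov ow).2 ltac:(lra); lra.
- have [A B] := (fact2 b10 (ltW p12) ou ov).2 ltac:(lra).
  have [C D] := (fact2 b20 (ltW p23) ov ow).2 ltac:(lra).
  split; [right|left]; apply/andP; split => //.
Qed.
End Abstract.

Section Thr.
Variable R : realFieldType.
Implicit Types t p r h : R.

Lemma thrE t p r : thr t p r = ((t < r)%R)%:R + p * ((r == t)%R)%:R.
Proof.
by rewrite /thr; case: (ltgtP t r) => [h|h|_]; rewrite ?mulr0 ?mulr1 ?addr0 ?add0r.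
Qed.

Lemma thr_ge0 t p r : 0 <= p -> 0 <= thr t p r.
Proof. by move=> hp; rewrite /thr; case: ifP => // _; case: ifP. Qed.
Lemma thr_le1 t p r : p <= 1 -> thr t p r <= 1.
Proof. by move=> hp; rewrite /thr; case: ifP => // _; case: ifP. Qed.

Lemma thr_key t p r (h : R) : 0 <= h <= 1 -> 0 <= p <= 1 -> 0 <= (h - thr t p r) * (t - r).
Proof.
move=> /andP[h0 h1] /andP[p0 p1]; rewrite /thr; case: (ltgtP t r) => [tr|rt|->].
- by apply: mulr_le0; lra.
- by apply: mulr_ge0; lra.
- by rewrite subrr mulr0.
Qed.

Lemma thr_total t p t' p' : 0 <= p <= 1 -> 0 <= p' <= 1 ->
  (forall r, thr t p r <= thr t' p' r) \/ (forall r, thr t' p' r <= thr t p r).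
Proof.
move=> /andP[p0 p1] /andP[p0' p1'].
have gen : forall t p t' p', 0 <= p <= 1 -> 0 <= p' <= 1 -> t < t' ->
    forall r, thr t' p' r <= thr t p r.
  move=> {p0 p1 p0' p1'} t1 q1 t2 q2 /andP[? ?] /andP[? ?] lt r.
  rewrite {1}/thr; case: (ltgtP t2 r) => [h|h|e].
  - by rewrite /thr (lt_trans lt h).
  - exact: thr_ge0.
  - by rewrite /thr -e lt.
case: (ltgtP t t') => [h|h|<-].
- by right; apply: gen => //; apply/andP; split.
- by left; apply: gen => //; apply/andP; split.
- case: (lerP p p') => h; [left|right] => r; rewrite /thr; case: ifP => // _; case: ifP => //; lra.
Qed.

Lemma ex_max (n : nat) (P : pred 'I_n) (f : 'I_n -> R) i0 : P i0 ->
  exists i, P i /\ forall j, P j -> f j <= f i.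
Proof. by move=> h; case: (arg_maxP f h) => i Pi H; exists i; split. Qed.
Lemma ex_min (n : nat) (P : pred 'I_n) (f : 'I_n -> R) i0 : P i0 ->
  exists i, P i /\ forall j, P j -> f i <= f j.
Proof. by move=> h; case: (arg_minP f h) => i Pi H; exists i; split. Qed.

Lemma realize (n : nat) (P : pred 'I_n) (s : 'I_n -> R) (g : R) :
  (exists i, P i) -> 0 <= g <= #|P|%:R ->
  exists i0, P i0 /\ exists p, 0 <= p <= 1 /\ \sum_(i < n | P i) thr (s i0) p (s i) = g.
Proof.
move=> [iP HiP] /andP[g0 gP].
pose cnt v := \sum_(i < n | P i) ((v <= s i)%R)%:R : R.
pose gtc v := \sum_(i < n | P i) ((v < s i)%R)%:R : R.
pose eqc v := \sum_(i < n | P i) ((s i == v)%R)%:R : R.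
have cntE v : cnt v = gtc v + eqc v.
  rewrite /cnt /gtc /eqc -big_split /=; apply: eq_bigr => i _.
  by case: (ltgtP v (s i)) => _; rewrite ?addr0 ?add0r.
have [imin [Pmin Hmin]] := ex_min s HiP.
have Cmin : P imin && (g <= cnt (s imin)).
  rewrite Pmin /= /cnt (eq_bigr (fun _ => 1)); first by rewrite sumr_const.
  by move=> i Pi; rewrite Hmin.
have [i0 [/andP[P0 C0] Hmax]] := ex_max (P := fun i => P i && (g <= cnt (s i))) s Cmin.
set t := s i0.
have gtle : gtc t <= g.
  rewrite leNgt; apply/negP => lt.
  have [i1 Q1] : exists i1, P i1 && (t < s i1).
    case: (boolP [exists i, P i && (t < s i)]) => [/existsP //|/existsPn H].
    exfalso; move: lt; rewrite /gtc big1 ?ltNge ?g0 // => i Pi.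
    by move: (H i); rewrite Pi /= => /negbTE ->.
  have [i2 [/andP[P2 T2] H2]] := ex_min (P := fun i => P i && (t < s i)) s Q1.
  have e : cnt (s i2) = gtc t.
    apply: eq_bigr => i Pi; have -> : (s i2 <= s i) = (t < s i); last by [].
    apply/idP/idP => [h|h]; first exact: lt_le_trans T2 h.
    by apply: H2; rewrite Pi h.
  have := Hmax i2; rewrite P2 e /= (ltW lt) => /(_ isT) h.
  by move: T2; rewrite ltNge h.
have eqpos : 1 <= eqc t.
  rewrite /eqc (bigD1 i0) //= eqxx lerDl; apply: sumr_ge0 => i _; exact: ler0n.
have eq0 : 0 < eqc t by apply: lt_le_trans eqpos; exact: ltr01.
exists i0; split => //; exists ((g - gtc t) / eqc t); split.
  apply/andP; split; first by apply: divr_ge0; [rewrite subr_ge0 | exact: ltW].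
  by rewrite ler_pdivrMr // mul1r lerBlDl -cntE.
rewrite (eq_bigr (fun i => ((t < s i)%R)%:R + (g - gtc t) / eqc t * ((s i == t)%R)%:R));
  last by move=> i _; rewrite thrE.
rewrite big_split /= -mulr_sumr -/(gtc t) -/(eqc t) divfK ?gt_eqF //.
by rewrite addrC subrK.
Qed.
End Thr.

Section Conc.
Variables (R : realType) (X : Type) (N M : nat) (x : 'I_N -> X) (a : 'I_N -> 'I_2)
  (y : 'I_N -> bool) (c : 'I_2 -> X -> 'I_M) (k : fairness).
Local Notation sc := (gabos_score R x a y c).
Definition S j i := sc (x i) j.
Local Notation fr := (gabos_freq R x a y c).

Lemma fr_mul j m : fr j m * (#|[pred i | (a i == j) && (c j (x i) == m)]|)%:R =
   (#|[pred i | (a i == j) && y i && (c j (x i) == m)]|)%:R.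
Proof.
rewrite /gabos_freq; set A := #|_|; set B := #|_|.
have BA : (A <= B)%N.
  apply: subset_leq_card; apply/subsetP => i; rewrite !inE.
  by case: (a i == j); case: (y i).
have [A0|Ap] := posnP B.
  by move: BA; rewrite A0 leqn0 => /eqP ->; rewrite !mul0r.
by rewrite divfK // pnatr_eq0 -lt0n.
Qed.

Lemma gabos j (h : R -> R) : \sum_(i < N | a i == j) h (S j i) * (y i)%:R =
  \sum_(i < N | a i == j) h (S j i) * S j i.
Proof.
rewrite (partition_big (fun i => c j (x i)) predT) //=.
rewrite [RHS](partition_big (fun i => c j (x i)) predT) //=.
apply: eq_bigr => m _.
have SE : forall i, (a i == j) && (c j (x i) == m) -> S j i = fr j m.
  by move=> i /andP[_ /eqP e]; rewrite /S /gabos_score e.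
rewrite (eq_bigr (fun i => h (fr j m) * (y i)%:R)); last by move=> i /SE ->.
rewrite [RHS](eq_bigr (fun i => h (fr j m) * fr j m)); last by move=> i /SE ->.
have E : \sum_(i < N | (a i == j) && (c j (x i) == m)) ((y i)%:R : R) =
    (#|[pred i | (a i == j) && y i && (c j (x i) == m)]|)%:R.
  rewrite (eq_bigr (fun i => if y i then 1 else 0)); last by move=> i _; case: (y i).
  rewrite -big_mkcondr /= sumr_const; congr (_%:R).
  apply: eq_card => i; rewrite !inE /=; rewrite unfold_in /=; by case: (a i == j); case: (y i); case: (_ == m).
rewrite -mulr_sumr E -fr_mul sumr_const -mulr_natr mulrA.
have EC : #|[pred i | (a i == j) && (c j (x i) == m)]| = #|(fun i : 'I_N => (a i == j) && (c j (x i) == m))| by apply: eq_card => i; by rewrite !inE.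
rewrite EC -mulr_natr; ring.
Qed.

Definition GH j (h : R -> R) : R :=
  (\sum_(i < N | (a i == j) && bcond y k i) h (S j i)) /
  (#|[pred i | (a i == j) && bcond y k i]|)%:R.
Definition RH j (h : R -> R) : R :=
  (\sum_(i < N | a i == j) h (S j i)) / (#|[pred i | a i == j]|)%:R.
Definition LamH j (h : R -> R) : R :=
  \sum_(i < N | a i == j) (if y i then 1 - h (S j i) else h (S j i)).
Definition wt j i : R := if k is EO then S j i else 1.
Definition rho (t : R) : R := if k is EO then t^-1 else 2.

Lemma sumP_wt j h : \sum_(i < N | (a i == j) && bcond y k i) h (S j i) =
  \sum_(i < N | a i == j) h (S j i) * wt j i.
Proof.
rewrite /wt; case: k => /=.
  by apply: eq_big => [i|i _]; rewrite ?andbT ?mulr1.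
rewrite -gabos big_mkcondr /=; apply: eq_bigr => i _.
by case: (y i); rewrite ?mulr1 ?mulr0.
Qed.

Lemma LamH_diff j h1 h2 : LamH j h1 - LamH j h2 =
  \sum_(i < N | a i == j) (h1 (S j i) - h2 (S j i)) * (1 - 2 * S j i).
Proof.
have -> : LamH j h1 - LamH j h2 = \sum_(i < N | a i == j)
    ((h1 (S j i) - h2 (S j i)) - 2 * ((h1 (S j i) - h2 (S j i)) * (y i)%:R)).
  rewrite /LamH -sumrB; apply: eq_bigr => i _; case: (y i); rewrite /=; ring.
rewrite sumrB -mulr_sumr (gabos j (fun r => h1 r - h2 r)) mulr_sumr -sumrB.
by apply: eq_bigr => i _; ring.
Qed.

Lemma OL j t p h : (k = EO -> 0 < t) ->
  \sum_(i < N | (a i == j) && bcond y k i) h (S j i) =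
  \sum_(i < N | (a i == j) && bcond y k i) thr t p (S j i) ->
  LamH j h - LamH j (thr t p) =
  \sum_(i < N | a i == j) (h (S j i) - thr t p (S j i)) * (t - S j i) * rho t.
Proof.
move=> tpos e.
have e0 : \sum_(i < N | a i == j) (h (S j i) - thr t p (S j i)) * wt j i = 0.
  by rewrite (eq_bigr (fun i => h (S j i) * wt j i - thr t p (S j i) * wt j i))
    ?sumrB -?sumP_wt ?e ?subrr // => i _; rewrite mulrBl.
pose kap : R := if k is EO then t^-1 - 2 else 1 - 2 * t.
rewrite LamH_diff.
transitivity (\sum_(i < N | a i == j) (h (S j i) - thr t p (S j i)) * (1 - 2 * S j i) -
   kap * \sum_(i < N | a i == j) (h (S j i) - thr t p (S j i)) * wt j i);
  first by rewrite e0 mulr0 subr0.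
rewrite mulr_sumr -sumrB.
apply: eq_bigr => i _; rewrite /kap /wt /rho.
move: tpos; case: k => [_|/(_ erefl) tp]; first by ring.
by field; rewrite gt_eqF.
Qed.

Lemma OL_ge0 j t p h : 0 <= p <= 1 -> (k = EO -> 0 < t) ->
  (forall i, a i == j -> 0 <= h (S j i) <= 1) ->
  \sum_(i < N | (a i == j) && bcond y k i) h (S j i) =
  \sum_(i < N | (a i == j) && bcond y k i) thr t p (S j i) ->
  LamH j (thr t p) <= LamH j h.
Proof.
move=> hp tpos hh e; rewrite -subr_ge0 (OL tpos e); apply: sumr_ge0 => i /hh hi.
apply: mulr_ge0; first exact: thr_key.
rewrite /rho; move: tpos; case: k => [_|/(_ erefl) tp] //; by rewrite invr_ge0 ltW.
Qed.

Lemma S_ge0 j i : 0 <= S j i.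
Proof. by rewrite /S /gabos_score /gabos_freq divr_ge0. Qed.
Lemma S_le1 j i : S j i <= 1.
Proof.
rewrite /S /gabos_score /gabos_freq; set A := #|_|; set B := #|_|.
have BA : (A <= B)%N.
  apply: subset_leq_card; apply/subsetP => i'; rewrite !inE.
  by case: (a i' == j); case: (y i').
have [A0|Ap] := posnP B; first by rewrite A0 invr0 mulr0.
by rewrite ler_pdivrMr ?mul1r ?ler_nat // ltr0n.
Qed.

Lemma S_pos j i : a i == j -> y i -> 0 < S j i.
Proof.
move=> /eqP ai yi; rewrite /S /gabos_score /gabos_freq divr_gt0 // ltr0n; apply/card_gt0P;
  by exists i; rewrite !inE ai !eqxx ?yi.
Qed.

Lemma I2 (o : 'I_2) : (o != g1) = (o == g2).
Proof. by case: o => [[|[|n]] h]. Qed.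

Lemma loss_split tt pp : loss x a y (clf sc tt pp) =
  (LamH g1 (thr (tt g1) (pp g1)) + LamH g2 (thr (tt g2) (pp g2))) / N%:R.
Proof.
rewrite /loss; congr (_ / _); rewrite (bigID (fun i => a i == g1)) /=; congr (_ + _).
  by apply: eq_bigr => i /eqP e; rewrite /clf e.
by apply: eq_big => [i|i]; rewrite ?I2 // => /eqP e; rewrite /clf e.
Qed.

Lemma grate tt pp j : group_rate x a y k (clf sc tt pp) j = GH j (thr (tt j) (pp j)).
Proof.
by rewrite /group_rate /GH; congr (_ / _); apply: eq_bigr => i /andP[/eqP e _]; rewrite /clf e.
Qed.

Lemma bias_split tt pp : bias x a y k (clf sc tt pp) =
  GH g1 (thr (tt g1) (pp g1)) - GH g2 (thr (tt g2) (pp g2)).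
Proof. by rewrite /bias !grate. Qed.

Lemma rateE j t p : rate x a sc j t p = RH j (thr t p).
Proof. by []. Qed.

Hypothesis Hne : forall j, exists i, (a i == j) && bcond y k i.

Lemma cardP_gt0 j : (0 < #|[pred i | (a i == j) && bcond y k i]|)%N.
Proof. by have [i hi] := Hne j; apply/card_gt0P; exists i. Qed.
Lemma cardA_gt0 j : (0 < #|[pred i | a i == j]|)%N.
Proof. by have [i /andP[hi _]] := Hne j; apply/card_gt0P; exists i. Qed.

Lemma avg01 (P : pred 'I_N) (h : 'I_N -> R) : (0 < #|P|)%N ->
  (forall i, P i -> 0 <= h i <= 1) -> in01 ((\sum_(i < N | P i) h i) / #|P|%:R).
Proof.
move=> cp hh; have cpR : 0 < (#|P|%:R : R) by rewrite ltr0n.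
apply/andP; split.
  by apply: divr_ge0; [apply: sumr_ge0 => i /hh /andP[] | apply: ltW].
rewrite ler_pdivrMr // mul1r -sumr_const; apply: ler_sum => i /hh /andP[_ //].
Qed.

Lemma GH01 j h : (forall i, a i == j -> 0 <= h (S j i) <= 1) -> in01 (GH j h).
Proof. by move=> hh; apply: avg01 (cardP_gt0 j) _ => i /andP[/hh]. Qed.
Lemma RH01 j h : (forall i, a i == j -> 0 <= h (S j i) <= 1) -> in01 (RH j h).
Proof. by move=> hh; apply: avg01 (cardA_gt0 j) _ => i /hh. Qed.

Lemma thr01 (t p r : R) : 0 <= p <= 1 -> 0 <= thr t p r <= 1.
Proof. by move=> /andP[p0 p1]; rewrite thr_ge0 ?thr_le1. Qed.

Lemma real_ex j u : exists tp : R * R, in01 u ->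
  [/\ 0 <= tp.2 <= 1, (k = EO -> 0 < tp.1) & GH j (thr tp.1 tp.2) = u].
Proof.
case: (boolP (in01 u)) => hu; last by exists (0, 0).
have cp := cardP_gt0 j; have cpR : 0 < (#|[pred i | (a i == j) && bcond y k i]|%:R : R) by rewrite ltr0n.
move: (hu); rewrite /in01 => /andP[u0 u1].
have [i0 [Pi0 [p [hp e]]]] := @realize R N [pred i | (a i == j) && bcond y k i] (S j)
   (u * #|[pred i | (a i == j) && bcond y k i]|%:R) (Hne j)
   ltac:(apply/andP; split; [apply: mulr_ge0 => //; exact: ltW | apply: ler_piMl => //; exact: ltW]).
exists (S j i0, p) => _; split => //=.
  by move=> ek; move: Pi0; rewrite inE ek /= => /andP[]; apply: S_pos.
by rewrite /GH e mulfK // gt_eqF.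
Qed.

Lemma sumP_GH j h : \sum_(i < N | (a i == j) && bcond y k i) h (S j i) =
  GH j h * (#|[pred i | (a i == j) && bcond y k i]|)%:R.
Proof. by rewrite /GH divfK // pnatr_eq0 -lt0n cardP_gt0. Qed.

Lemma uniq_core j h1 h2 : (forall r, h1 r <= h2 r) ->
  GH j h1 = GH j h2 -> forall i, a i == j -> wt j i != 0 -> h1 (S j i) = h2 (S j i).
Proof.
move=> le e.
have e0 : \sum_(i < N | a i == j) (h2 (S j i) - h1 (S j i)) * wt j i = 0.
  rewrite (eq_bigr (fun i => h2 (S j i) * wt j i - h1 (S j i) * wt j i)); last by move=> i _; rewrite mulrBl.
  by rewrite sumrB -!sumP_wt !sumP_GH e subrr.
have wt0 : forall i, 0 <= wt j i by move=> i; rewrite /wt; case: k => //; apply: S_ge0.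
have nn : forall i', a i' == j -> 0 <= (h2 (S j i') - h1 (S j i')) * wt j i'.
  by move=> i' _; apply: mulr_ge0 => //; rewrite subr_ge0; exact: le.
move=> i ai wn; have /eqP := psumr_eq0P nn e0 ai.
by rewrite mulf_eq0 (negbTE wn) orbF subr_eq0 => /eqP ->.
Qed.

Definition real j u : R * R := proj1_sig (constructive_indefinite_description _ (real_ex j u)).
Lemma realP j u : in01 u ->
  [/\ 0 <= (real j u).2 <= 1, (k = EO -> 0 < (real j u).1) & GH j (thr (real j u).1 (real j u).2) = u].
Proof. exact: (proj2_sig (constructive_indefinite_description _ (real_ex j u))). Qed.

Definition th j u := thr (real j u).1 (real j u).2.
Definition phi j u := LamH j (th j u) / N%:R.
Definition Tf j u := 1 - RH j (th j u).

Lemma th01 j u r : in01 u -> 0 <= th j u r <= 1.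
Proof. by move=> /(realP j) [hp _ _]; apply: thr01. Qed.

Lemma th_le j u v : in01 u -> in01 v -> u < v -> forall r, th j u r <= th j v r.
Proof.
move=> hu hv uv.
have [pu _ eu] := realP j hu; have [pv _ ev] := realP j hv.
case: (thr_total (real j u).1 (real j v).1 pu pv) => // H; exfalso.
have : \sum_(i < N | (a i == j) && bcond y k i) th j v (S j i) <=
       \sum_(i < N | (a i == j) && bcond y k i) th j u (S j i) by apply: ler_sum => i _; apply: H.
rewrite !sumP_GH /th eu ev ler_pM2r ?ltr0n ?cardP_gt0 //.
by rewrite leNgt uv.
Qed.

Lemma Tf_dec j u v : in01 u -> in01 v -> u < v -> Tf j v < Tf j u.
Proof.
move=> hu hv uv; have le := th_le j hu hv uv.
have [pu _ eu] := realP j hu; have [pv _ ev] := realP j hv.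
rewrite /Tf; suff : RH j (th j u) < RH j (th j v) by lra.
rewrite -subr_gt0 /RH -mulrBl.
apply: divr_gt0; last by rewrite ltr0n cardA_gt0.
rewrite -sumrB (bigID (fun i => bcond y k i)) /=.
apply: lt_le_trans (_ : 0 < \sum_(i < N | (a i == j) && bcond y k i) (th j v (S j i) - th j u (S j i))) _.
  by rewrite sumrB !sumP_GH /th eu ev -mulrBl mulr_gt0 ?subr_gt0 ?ltr0n ?cardP_gt0.
rewrite lerDl; apply: sumr_ge0 => i _; rewrite subr_ge0; exact: le.
Qed.

Lemma phi_conv j : convex01 (phi j).
Proof.
move=> u v l hu hv hl.
have hw := in01_conv hu hv hl.
have [pw tw ew] := realP j hw.
have [pu _ eu] := realP j hu; have [pv _ ev] := realP j hv.
move: (hl); rewrite /in01 => /andP[l0 l1].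
pose h r := l * th j u r + (1 - l) * th j v r.
have h01 : forall i, a i == j -> 0 <= h (S j i) <= 1.
  move=> i _; have /andP[? ?] := th01 j (S j i) hu; have /andP[? ?] := th01 j (S j i) hv.
  apply/andP; split; rewrite /h; nra.
have sh : \sum_(i < N | (a i == j) && bcond y k i) h (S j i) =
          \sum_(i < N | (a i == j) && bcond y k i) th j (l * u + (1 - l) * v) (S j i).
  rewrite [RHS]sumP_GH /th ew /h big_split /= -!mulr_sumr !sumP_GH /th eu ev; ring.
have := OL_ge0 pw tw h01 sh.
have -> : LamH j h = l * LamH j (th j u) + (1 - l) * LamH j (th j v).
  rewrite /LamH !mulr_sumr -big_split /=; apply: eq_bigr => i _; rewrite /h.
  by case: (y i); ring.
rewrite /phi -/(th j _) => H.
have Ni : 0 <= (N%:R : R)^-1 by rewrite invr_ge0 ler0n.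
rewrite !mulrA -!mulrDl; apply: ler_wpM2r => //.
Qed.

Lemma I2cases (o : 'I_2) : o = g1 \/ o = g2.
Proof. case: o => [[|[|n]] h]; [left|right|by []]; by apply/eqP. Qed.

Lemma g21 : (g2 == g1) = false. Proof. by []. Qed.
Lemma g12 : (g1 == g2) = false. Proof. by []. Qed.

Lemma sum2 (F : 'I_2 -> R) j v :
  (if g1 == j then v else F g1) + (if g2 == j then v else F g2) = F g1 + F g2 - F j + v.
Proof. by case: (I2cases j) => ->; rewrite eqxx ?g21 ?g12; ring. Qed.

Lemma rho_ge0 t : (k = EO -> 0 < t) -> 0 <= rho t.
Proof. rewrite /rho; case: k => // /(_ erefl) tp; by rewrite invr_ge0 ltW. Qed.

Lemma sel_equiv beta tau tt pp : postproc_opt x a y k sc beta tau tt pp ->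
  forall j i, a i == j -> thr (tt j) (pp j) (S j i) = th j (GH j (thr (tt j) (pp j))) (S j i).
Proof.
move=> [Hn [Hb Hopt]] j.
have [_ [pj _]] := Hn j.
set u := GH j (thr (tt j) (pp j)).
have hu : in01 u by apply: GH01 => i _; apply: thr01.
have [p' t' e'] := realP j hu.
have eG : GH j (thr (tt j) (pp j)) = GH j (th j u) by rewrite /th e'.
move=> i ai.
have zcase : wt j i = 0 -> k = EO /\ S j i = 0.
  by rewrite /wt; case: k => [/eqP|]; [rewrite oner_eq0 | ].
have th0 : k = EO -> S j i = 0 -> th j u (S j i) = 0.
  by move=> ek ->; rewrite /th /thr ltNge (ltW (t' ek)) /= lt_eqF ?(t' ek).
case: (thr_total (tt j) (real j u).1 pj p') => H.
  case: (eqVneq (wt j i) 0) => [/zcase [ek S0]|wn]; last exact: uniq_core.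
  rewrite th0 //; apply/eqP; rewrite eq_le thr_ge0 ?andbT; last by case/andP: pj.
  by rewrite -(th0 ek S0); apply: H.
case: (eqVneq (wt j i) 0) => [/zcase [ek S0]|wn]; last by symmetry; apply: uniq_core => //.
rewrite th0 //; apply/eqP; rewrite eq_le thr_ge0 ?andbT; last by case/andP: pj.
rewrite leNgt; apply/negP => selpos; exfalso.
have sP : \sum_(i < N | (a i == j) && bcond y k i) thr (tt j) (pp j) (S j i) =
          \sum_(i < N | (a i == j) && bcond y k i) thr (real j u).1 (real j u).2 (S j i).
  by rewrite !sumP_GH eG.
have strict : LamH j (thr (real j u).1 (real j u).2) < LamH j (thr (tt j) (pp j)).
  rewrite -subr_gt0 (OL t' sP) (bigD1 i) //=.
  apply: lt_le_trans (_ : 0 < (thr (tt j) (pp j) (S j i) - thr (real j u).1 (real j u).2 (S j i)) *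
      ((real j u).1 - S j i) * rho (real j u).1) _.
    have -> : thr (real j u).1 (real j u).2 (S j i) = 0 by exact: (th0 ek S0).
    rewrite S0 subr0 subr0 /rho ek mulfK ?gt_eqF ?(t' ek) //.
    by move: selpos; rewrite S0.
  rewrite lerDl; apply: sumr_ge0 => i' /andP[ai' _]; apply: mulr_ge0; last exact: rho_ge0.
  by apply: thr_key => //; apply: thr01.
pose tt' j' := if j' == j then (real j u).1 else tt j'.
pose pp' j' := if j' == j then (real j u).2 else pp j'.
pose tau' j' := if j' == j then 1 - RH j (th j u) else tau j'.
have Hn' : forall j', is_nthr x a sc j' (tau' j') (tt' j') (pp' j').
  move=> j'; rewrite /tau' /tt' /pp'; case: (eqVneq j' j) => [->|_]; last exact: Hn.
  have /andP[r0 r1] : in01 (RH j (th j u)) by apply: RH01 => i' _; apply: th01.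
  split; first by apply/andP; split; lra.
  by split => //; rewrite rateE /th; ring.
have eGall : forall j', GH j' (thr (tt' j') (pp' j')) = GH j' (thr (tt j') (pp j')).
  by move=> j'; rewrite /tt' /pp'; case: (eqVneq j' j) => [->|_] //; rewrite -/(th j u) -eG.
have Hb' : `|bias x a y k (clf sc tt' pp')| <= beta by rewrite bias_split !eGall -bias_split.
have := Hopt tau' tt' pp' Hn' Hb'; cbv zeta.
have LL : loss x a y (clf sc tt' pp') < loss x a y (clf sc tt pp).
  have LJ : forall j', LamH j' (thr (tt' j') (pp' j')) =
      if j' == j then LamH j (th j u) else LamH j' (thr (tt j') (pp j')).
    by move=> j'; rewrite /tt' /pp'; case: (eqVneq j' j) => [->|_].
  have Npos : (0 < N)%N by case: (Hne j) => -[i0 hi0] _; exact: leq_ltn_trans (leq0n _) hi0.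
  rewrite !loss_split !LJ.
  have E := sum2 (fun j' => LamH j' (thr (tt j') (pp j'))) j (LamH j (th j u)); rewrite /= in E.
  rewrite E ltr_pM2r ?invr_gt0 ?ltr0n //.
  move: strict; rewrite -/(th j u) /=; lra.
by case=> [h|[h _]]; [move: (lt_trans h LL); rewrite ltxx | move: LL; rewrite h ltxx].
Qed.


Lemma sel_opt beta tau tt pp : postproc_opt x a y k sc beta tau tt pp ->
  opt (phi g1) (phi g2) (Tf g1) (Tf g2) beta
    (GH g1 (thr (tt g1) (pp g1))) (GH g2 (thr (tt g2) (pp g2))).
Proof.
move=> H; have He := sel_equiv H; move: H => [Hn [Hb Hopt]].
have hu : forall j, in01 (GH j (thr (tt j) (pp j))).
  by move=> j; have [_ [pj _]] := Hn j; apply: GH01 => i _; apply: thr01.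
have LamE : forall j, LamH j (thr (tt j) (pp j)) = LamH j (th j (GH j (thr (tt j) (pp j)))).
  by move=> j; apply: eq_bigr => i ai; rewrite He.
have RHE : forall j, RH j (thr (tt j) (pp j)) = RH j (th j (GH j (thr (tt j) (pp j)))).
  by move=> j; rewrite /RH; congr (_ / _); apply: eq_bigr => i ai; rewrite He.
have tauE : forall j, tau j = Tf j (GH j (thr (tt j) (pp j))).
  move=> j; have [_ [_ e]] := Hn j; move: e; rewrite rateE RHE /Tf => e; rewrite e; ring.
have Lsel : loss x a y (clf sc tt pp) =
    phi g1 (GH g1 (thr (tt g1) (pp g1))) + phi g2 (GH g2 (thr (tt g2) (pp g2))).
  by rewrite loss_split !LamE /phi mulrDl.
split; [exact: hu | exact: hu | by rewrite -bias_split |].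
move=> v1 v2 hv1 hv2 hvb.
pose tt' (j' : 'I_2) := if j' == g1 then (real g1 v1).1 else (real g2 v2).1.
pose pp' (j' : 'I_2) := if j' == g1 then (real g1 v1).2 else (real g2 v2).2.
pose tau' (j' : 'I_2) := if j' == g1 then Tf g1 v1 else Tf g2 v2.
have nth : forall j v, in01 v -> is_nthr x a sc j (Tf j v) (real j v).1 (real j v).2.
  move=> j v hv; have [pv _ _] := realP j hv.
  have /andP[r0 r1] : in01 (RH j (th j v)) by apply: RH01 => i' _; apply: th01.
  split; first by apply/andP; rewrite /Tf; split; lra.
  by split => //; rewrite rateE /Tf /th; ring.
have Hn' : forall j', is_nthr x a sc j' (tau' j') (tt' j') (pp' j').
  by move=> j'; case: (I2cases j') => ->; rewrite /tau' /tt' /pp' ?eqxx ?g21; apply: nth.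
have [_ _ e1] := realP g1 hv1; have [_ _ e2] := realP g2 hv2.
have Bc : bias x a y k (clf sc tt' pp') = v1 - v2.
  by rewrite bias_split /tt' /pp' eqxx g21 e1 e2.
have Lc : loss x a y (clf sc tt' pp') = phi g1 v1 + phi g2 v2.
  by rewrite loss_split /tt' /pp' eqxx g21 /phi mulrDl.
have := Hopt tau' tt' pp' Hn' ltac:(by rewrite Bc); cbv zeta.
by rewrite Lsel Lc bias_split Bc !tauE /tau' eqxx g21.
Qed.
End Conc.

Unset Implicit Arguments.
Theorem theorem4 (R : realType) (X : Type) (N M : nat)
  (x : 'I_N -> X) (a : 'I_N -> 'I_2) (y : 'I_N -> bool)
  (c : 'I_2 -> X -> 'I_M) (k : fairness)
  (Hcells : forall (j : 'I_2) (m : 'I_M), exists i : 'I_N, a i = j /\ c j (x i) = m)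
  (Hwd : k = EO -> forall j : 'I_2, exists i : 'I_N, a i = j /\ y i)
  (sel_tau sel_t sel_p : R -> 'I_2 -> R)
  (Hsel : forall beta : R, 0 < beta ->
     postproc_opt x a y k (gabos_score R x a y c) beta
       (sel_tau beta) (sel_t beta) (sel_p beta)) :
  forall (x0 : X) (j : 'I_2) (b1 b2 b3 : R), 0 < b1 -> b1 < b2 -> b2 < b3 ->
    let f := fun b => clf (gabos_score R x a y c) (sel_t b) (sel_p b) x0 j in
    (f b1 <= f b2 <= f b3) \/ (f b3 <= f b2 <= f b1).
Proof.
move=> x0 j b1 b2 b3 h1 h12 h23 f.
have Hne : forall j', exists i, (a i == j') && bcond y k i.
  move=> j'; case ek: k.
    by have [i [ai _]] := Hcells j' (c j' x0); exists i; rewrite ai eqxx.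
  by have [i [ai yi]] := Hwd ek j'; exists i; rewrite ai eqxx /= yi.
have [i0 [ai0 ci0]] := Hcells j (c j x0).
have hb2 : 0 < b2 by apply: lt_trans h12.
have hb3 : 0 < b3 by apply: lt_trans h23.
have fE : forall b, 0 < b -> f b = th x c Hne j (GH x a y c k j (thr (sel_t b j) (sel_p b j))) (S R x a y c j i0).
  move=> b hb; rewrite -(sel_equiv Hne (Hsel b hb)); last by rewrite ai0.
  by rewrite /f /clf /S /gabos_score ci0.
have o1 := sel_opt Hne (Hsel b1 h1).
have o2 := sel_opt Hne (Hsel b2 hb2).
have o3 := sel_opt Hne (Hsel b3 hb3).
have T1d : forall u v : R, in01 u -> in01 v -> u < v -> Tf x c Hne g1 v < Tf x c Hne g1 u.
  by move=> u v; apply: Tf_dec.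
have T2d : forall u v : R, in01 u -> in01 v -> u < v -> Tf x c Hne g2 v < Tf x c Hne g2 u.
  by move=> u v; apply: Tf_dec.
have [A B] := abs_main (phi_conv x c Hne g1) (phi_conv x c Hne g2) T1d T2d h1 h12 h23 o1 o2 o3.
have mono : forall j' (u v r : R), in01 u -> in01 v -> u <= v -> th x c Hne j' u r <= th x c Hne j' v r.
  move=> j' u v r hu hv; rewrite le_eqVlt => /orP[/eqP -> //|uv].
  exact: (th_le x c Hne j' hu hv uv r).
have inu : forall b, 0 < b -> in01 (GH x a y c k j (thr (sel_t b j) (sel_p b j))).
  move=> b hb; have [_ [pj _]] := (Hsel b hb).1 j.
  by apply: GH01 => // i _; apply: thr01.
rewrite !fE //.
have H : forall u1 u2 u3 : R, in01 u1 -> in01 u2 -> in01 u3 ->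
  (u1 <= u2 <= u3) \/ (u3 <= u2 <= u1) ->
  (th x c Hne j u1 (S R x a y c j i0) <= th x c Hne j u2 (S R x a y c j i0) <= th x c Hne j u3 (S R x a y c j i0)) \/
  (th x c Hne j u3 (S R x a y c j i0) <= th x c Hne j u2 (S R x a y c j i0) <= th x c Hne j u1 (S R x a y c j i0)).
  move=> u1 u2 u3 hu1 hu2 hu3 [/andP[p q]|/andP[p q]]; [left|right]; apply/andP; split;
    apply: mono => //.
apply: H; rewrite ?inu //.
by case: (I2cases j) => ejj; rewrite ejj.
Qed.
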